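(* Let $d\ge1$ be an integer, $0<\lambda<1$, and define $v^*_0=1$ and $v^*_k=1-\sqrt[d]{1-\lambda v^*_{k-1}}$ for $k=1,2,\dots$. Then $v^*_k=\Theta((\lambda/d)^k)$ as $k\to\infty$, i.e. there exist constants $0<c\le C<\infty$ such that $c(\lambda/d)^k\le v^*_k\le C(\lambda/d)^k$ for all sufficiently large $k$. *)

(* Defs.v *)
From Stdlib Require Import Reals.
Open Scope R_scope.

(* d-th root of a positive real x, as x^(1/d) = exp((1/d) ln x).
   Only applied to arguments in (0,1] (since 0 <= v*_{k-1} <= 1, 0<lambda<1). *)
Definition droot (d : nat) (x : R) : R := Rpower x (/ INR d).

Fixpoint vstar (d : nat) (lam : R) (k : nat) : R :=
  match k with
  | O => 1
  | S k' => 1 - droot d (1 - lam * vstar d lam k')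
  end.

(* Main.v *)
Require Import Defs.
From Stdlib Require Import Reals.
From Stdlib Require Import Lra Lia Psatz.
Open Scope R_scope.

Lemma pow_facts (y : R) (n : nat) : 0 <= y <= 1 ->
  0 <= y ^ n <= 1 /\ 1 - y ^ n <= INR n * (1 - y) /\
  INR n * y ^ n * (1 - y) <= 1 - y ^ n.
Proof.
  intros Hy. induction n as [|n IH].
  - simpl. lra.
  - destruct IH as [[H0 H1] [HA HB]].
    rewrite S_INR. simpl.
    assert (0 <= y * y ^ n) by nra.
    assert (y * y ^ n <= y ^ n) by nra.
    assert (0 <= INR n) by apply pos_INR.
    repeat split; try nra.
Qed.

Lemma pow_le_y (y : R) (n : nat) : 0 <= y <= 1 -> (1 <= n)%nat -> y ^ n <= y.
Proof.
  intros Hy Hn. destruct n as [|n]; [lia|]. simpl.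
  destruct (pow_facts y n Hy) as [[H0 H1] _]. nra.
Qed.

Lemma root_facts (d : nat) (z : R) : (1 <= d)%nat -> 0 < z < 1 ->
  0 < droot d z /\ droot d z <= 1 /\ droot d z ^ d = z.
Proof.
  intros Hd Hz. unfold droot.
  assert (Hpos : 0 < Rpower z (/ INR d)) by (unfold Rpower; apply exp_pos).
  assert (Heq : Rpower z (/ INR d) ^ d = z).
  { rewrite <- Rpower_pow by exact Hpos. rewrite Rpower_mult.
    rewrite Rinv_l. apply Rpower_1; lra.
    apply not_0_INR; lia. }
  repeat split; auto.
  destruct (Rle_or_lt (Rpower z (/ INR d)) 1) as [H|H]; auto.
  exfalso. pose proof (Rlt_pow_R1 _ d H ltac:(lia)). lra.
Qed.

Theorem theorem3p3 (d : nat) (lam : R) :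
  (1 <= d)%nat -> 0 < lam < 1 ->
  exists c C : R, 0 < c /\ c <= C /\
    exists K : nat, forall k : nat, (K <= k)%nat ->
      c * (lam / INR d) ^ k <= vstar d lam k <= C * (lam / INR d) ^ k.
Proof.
  intros Hd Hl.
  assert (HdR : 1 <= INR d) by (apply (le_INR 1); lia).
  set (r := lam / INR d).
  assert (Hr : 0 < r) by (unfold r; apply Rdiv_lt_0_compat; lra).
  set (a := lam / (1 - lam)).
  assert (Ha : 0 < a) by (unfold a; apply Rdiv_lt_0_compat; lra).
  set (E := fun k : nat => exp (a * (1 - lam ^ k) / (1 - lam))).
  assert (HE : forall k, E (S k) = E k * exp (a * lam ^ k)).
  { intro k. unfold E. rewrite <- exp_plus. f_equal. simpl. field. lra. }
  assert (Main : forall k, r ^ k <= vstar d lam k <= E k * r ^ k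
                           /\ vstar d lam k <= lam ^ k).
  { induction k as [|k IH].
    - simpl. unfold E. simpl. replace (a * (1 - 1) / (1 - lam)) with 0 by (field; lra).
      rewrite exp_0. lra.
    - destruct IH as [[Hlo Hup] Hlk].
      set (v := vstar d lam k) in *.
      assert (Hrk : 0 < r ^ k) by (apply pow_lt; lra).
      assert (Hlk0 : 0 < lam ^ k) by (apply pow_lt; lra).
      assert (Hlk1 : lam ^ k <= 1) by (destruct (pow_facts lam k ltac:(lra)) as [[? ?] _]; lra) .
      assert (Hv0 : 0 < v) by lra.
      set (z := 1 - lam * v).
      assert (Hz : 0 < z < 1) by (unfold z; nra).
      destruct (root_facts d z Hd Hz) as [Hy0 [Hy1 Hyd]].
      set (y := droot d z) in *.
      assert (Hvs : vstar d lam (S k) = 1 - y) by reflexivity.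
      rewrite Hvs.
      destruct (pow_facts y d ltac:(lra)) as [_ [HA HB]].
      rewrite Hyd in HA, HB.
      pose proof (pow_le_y y d ltac:(lra) Hd) as HC. rewrite Hyd in HC.
      assert (HrE : r * INR d = lam) by (unfold r; field; lra).
      pose proof (exp_ineq1_le (a * lam ^ k)) as Hex.
      assert (HEk : 0 < E k) by (unfold E; apply exp_pos).
      rewrite HE.
      simpl.
      split; [split|].
      +
        assert (lam * v <= INR d * (1 - y)) by (unfold z in HA; lra).
        assert (r * v <= 1 - y).
        { apply (Rmult_le_reg_l (INR d)); [lra|]. nra. }
        nra.
      +
        assert (Hz2 : z * (1 + a * lam ^ k) >= 1).
        { assert (Hal : a * (1 - lam) = lam) by (unfold a; field; lra).
          assert (Hv1 : v <= 1) by lra.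
          assert (a * lam ^ k * (1 - lam * v) >= a * lam ^ k * (1 - lam)).
          { apply Rle_ge, Rmult_le_compat_l; nra. }
          assert (a * lam ^ k * (1 - lam) = lam * lam ^ k) by (transitivity (lam ^ k * (a * (1 - lam))); [ring|rewrite Hal; ring]).
          assert (lam * lam ^ k >= lam * v) by nra.
          unfold z. nra. }
        assert (H1 : 1 - y <= r * v * (1 + a * lam ^ k)).
        { apply (Rmult_le_reg_l (INR d * z)); [nra|].
          assert (INR d * z * (1 - y) <= lam * v) by (unfold z in HB |- *; nra).
          assert (INR d * z * (r * v * (1 + a * lam ^ k)) = lam * v * (z * (1 + a * lam ^ k))).
          { rewrite <- HrE. ring. }
          assert (lam * v * 1 <= lam * v * (z * (1 + a * lam ^ k))) by (apply Rmult_le_compat_l; nra).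
          lra. }
        assert (0 < 1 + a * lam ^ k) by nra.
        assert (r * v * (1 + a * lam ^ k) <= r * (E k * r ^ k) * (1 + a * lam ^ k)).
        { apply Rmult_le_compat_r; [lra|]. apply Rmult_le_compat_l; lra. }
        assert (r * (E k * r ^ k) * (1 + a * lam ^ k) <= r * (E k * r ^ k) * exp (a * lam ^ k)).
        { apply Rmult_le_compat_l; [nra|lra]. }
        nra.
      + unfold z in HC. nra. }
  exists 1, (exp (a / (1 - lam))).
  split; [lra|]. split.
  { pose proof (exp_ineq1_le (a / (1 - lam))).
    assert (0 < a / (1 - lam)) by (apply Rdiv_lt_0_compat; lra). lra. }
  exists 0%nat. intros k _.
  destruct (Main k) as [[Hlo Hup] _].
  split; [lra|].
  assert (E k <= exp (a / (1 - lam))).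
  { unfold E. destruct (pow_facts lam k ltac:(lra)) as [[? ?] _].
    assert (a * (1 - lam ^ k) / (1 - lam) <= a / (1 - lam)).
    { unfold Rdiv. apply Rmult_le_compat_r.
      - apply Rlt_le, Rinv_0_lt_compat; lra.
      - nra. }
    destruct H1 as [H1|H1]; [apply Rlt_le, exp_increasing; exact H1|rewrite H1; lra]. }
  assert (0 < r ^ k) by (apply pow_lt; lra). nra.
Qed.
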